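(* Let $G$ be a locally Hausdorff, locally compact groupoid acting (continuously, on the left) on a locally Hausdorff, locally compact space $X$. Let $G*X=\{(\gamma,x)\in G\times X: s(\gamma)=r(x)\}$ and $\Theta:G*X\to X\times X$, $\Theta(\gamma,x)=(\gamma\cdot x,x)$. Then $X$ is a proper $G$-space (i.e. $\Theta$ is a proper map) if and only if $\Theta^{-1}(W)$ is compact in $G*X$ for every compact set $W\subset X\times X$.
   Context: A locally Hausdorff, locally compact groupoid is a groupoid with a topology such that the groupoid operations are continuous, $G^{(0)}$ is Hausdorff, each point has a compact Hausdorff neighborhood, and the range map is open. A locally Hausdorff, locally compact space is a topological space in which every point has a compact Hausdorff neighborhood; ''compact'' means the finite-subcover property only (compact sets need not be Hausdorff). A left action of $G$ on $X$ uses a continuous anchor map $r:X\to G^{(0)}$; $\gamma\cdot x$ is defined when $s(\gamma)=r(x)$. A map $f:A\to B$ is proper if $f\times \mathrm{id}_C:A\times C\to B\times C$ is a closed map for every topological space $C$. $X$ is a proper $G$-space if $\Theta$ is proper. *)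

(* Defs.v *)
From Stdlib Require Import List.

Set Implicit Arguments.

Definition is_topology {T : Type} (op : (T -> Prop) -> Prop) : Prop :=
  op (fun _ => True) /\
  (forall U V, op U -> op V -> op (fun x => U x /\ V x)) /\
  (forall F : (T -> Prop) -> Prop,
      (forall U, F U -> op U) -> op (fun x => exists U, F U /\ U x)).

Definition closed {T : Type} (op : (T -> Prop) -> Prop) (F : T -> Prop) : Prop :=
  op (fun x => ~ F x).

Definition sub_open {T : Type} (op : (T -> Prop) -> Prop) (P : T -> Prop)
  (U : {x : T | P x} -> Prop) : Prop :=
  exists V, op V /\ forall x : {x : T | P x}, U x <-> V (proj1_sig x).

Definition prod_open {A B : Type} (opA : (A -> Prop) -> Prop) (opB : (B -> Prop) -> Prop)
  (W : A * B -> Prop) : Prop :=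
  forall p, W p -> exists U V, opA U /\ opB V /\ U (fst p) /\ V (snd p) /\
     (forall a b, U a -> V b -> W (a, b)).

Definition continuous {A B : Type} (opA : (A -> Prop) -> Prop) (opB : (B -> Prop) -> Prop)
  (f : A -> B) : Prop :=
  forall V, opB V -> opA (fun a => V (f a)).

Definition image {A B : Type} (f : A -> B) (S : A -> Prop) : B -> Prop :=
  fun b => exists a, S a /\ f a = b.

Definition closed_map {A B : Type} (opA : (A -> Prop) -> Prop) (opB : (B -> Prop) -> Prop)
  (f : A -> B) : Prop :=
  forall F, closed opA F -> closed opB (image f F).

Definition proper_map {A B : Type} (opA : (A -> Prop) -> Prop) (opB : (B -> Prop) -> Prop)
  (f : A -> B) : Prop :=
  forall (C : Type) (opC : (C -> Prop) -> Prop), is_topology opC ->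
    closed_map (prod_open opA opC) (prod_open opB opC)
               (fun q : A * C => (f (fst q), snd q)).

(** Compactness of a subset: finite-subcover property only (no Hausdorffness). *)
Definition compact {T : Type} (op : (T -> Prop) -> Prop) (K : T -> Prop) : Prop :=
  forall F : (T -> Prop) -> Prop,
    (forall U, F U -> op U) ->
    (forall x, K x -> exists U, F U /\ U x) ->
    exists l : list (T -> Prop),
      (forall U, In U l -> F U) /\ (forall x, K x -> exists U, In U l /\ U x).

Definition hausdorff_set {T : Type} (op : (T -> Prop) -> Prop) (S : T -> Prop) : Prop :=
  forall x y, S x -> S y -> x <> y ->
    exists U V, op U /\ op V /\ U x /\ V y /\ (forall z, S z -> U z -> V z -> False).

Definition neighborhood {T : Type} (op : (T -> Prop) -> Prop) (x : T) (N : T -> Prop) : Prop :=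
  exists U, op U /\ U x /\ (forall z, U z -> N z).

Definition locally_hausdorff_locally_compact {T : Type} (op : (T -> Prop) -> Prop) : Prop :=
  forall x, exists N, neighborhood op x N /\ compact op N /\ hausdorff_set op N.

(** * Groupoids: unit space given as a predicate [unit] on G; [mul g h] is
    meaningful when s g = r h. *)
Record groupoid_axioms {G : Type} (unit : G -> Prop) (r s : G -> G)
  (mul : G -> G -> G) (inv : G -> G) : Prop := {
  gr_unit_r : forall g, unit (r g);
  gr_unit_s : forall g, unit (s g);
  gr_unit_rs : forall u, unit u -> r u = u /\ s u = u;
  gr_mul_r : forall g h, s g = r h -> r (mul g h) = r g;
  gr_mul_s : forall g h, s g = r h -> s (mul g h) = s h;
  gr_assoc : forall g h k, s g = r h -> s h = r k ->
               mul (mul g h) k = mul g (mul h k);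
  gr_mul_runit : forall g, mul (r g) g = g;
  gr_mul_sunit : forall g, mul g (s g) = g;
  gr_inv_r : forall g, r (inv g) = s g;
  gr_inv_s : forall g, s (inv g) = r g;
  gr_mul_inv : forall g, mul g (inv g) = r g;
  gr_inv_mul : forall g, mul (inv g) g = s g
}.

Definition lhlc_groupoid {G : Type} (opG : (G -> Prop) -> Prop) (unit : G -> Prop)
  (r s : G -> G) (mul : G -> G -> G) (inv : G -> G) : Prop :=
  is_topology opG /\
  groupoid_axioms unit r s mul inv /\
  continuous (sub_open (prod_open opG opG) (fun p : G * G => s (fst p) = r (snd p)))
             opG (fun p => mul (fst (proj1_sig p)) (snd (proj1_sig p))) /\
  continuous opG opG inv /\
  hausdorff_set opG unit /\
  locally_hausdorff_locally_compact opG /\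
  (* range map r : G -> G^(0) is open (G^(0) with the relative topology) *)
  (forall U, opG U -> exists V, opG V /\
       forall u, image r U u <-> (V u /\ unit u)).

Definition GX {G X : Type} (s : G -> G) (rX : X -> G) : Type :=
  {p : G * X | s (fst p) = rX (snd p)}.

Definition continuous_action {G X : Type} (opG : (G -> Prop) -> Prop)
  (opX : (X -> Prop) -> Prop) (unit : G -> Prop) (r s : G -> G) (mul : G -> G -> G)
  (rX : X -> G) (act : G -> X -> X) : Prop :=
  continuous opX opG rX /\
  (forall x, unit (rX x)) /\
  continuous (sub_open (prod_open opG opX) (fun p : G * X => s (fst p) = rX (snd p)))
             opX (fun p => act (fst (proj1_sig p)) (snd (proj1_sig p))) /\
  (forall x, act (rX x) x = x) /\
  (forall g x, s g = rX x -> rX (act g x) = r g) /\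
  (forall g h x, s g = r h -> s h = rX x -> act (mul g h) x = act g (act h x)).

Definition Theta {G X : Type} (s : G -> G) (rX : X -> G) (act : G -> X -> X)
  (p : GX s rX) : X * X :=
  (act (fst (proj1_sig p)) (snd (proj1_sig p)), snd (proj1_sig p)).

Definition GX_open {G X : Type} (opG : (G -> Prop) -> Prop) (opX : (X -> Prop) -> Prop)
  (s : G -> G) (rX : X -> G) : (GX s rX -> Prop) -> Prop :=
  sub_open (prod_open opG opX) (fun p : G * X => s (fst p) = rX (snd p)).

Arguments GX_open {G X} opG opX s rX _.
Arguments Theta {G X} s rX act p.

(* Main.v *)
Require Import Defs.
From Stdlib Require Import List Classical.

Lemma list_choice {T U : Type} (R : T -> U -> Prop) (l : list T) :
  (forall t, In t l -> exists u, R t u) ->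
  exists l' : list U, (forall t, In t l -> exists u, In u l' /\ R t u) /\
                     (forall u, In u l' -> exists t, In t l /\ R t u).
Proof.
  induction l as [|t l IH]; intros H.
  - exists nil; split; intros ? [].
  - destruct (H t (or_introl eq_refl)) as [u Hu].
    destruct IH as [l' [H1 H2]]. { intros t' Ht'; apply H; right; exact Ht'. }
    exists (u :: l'); split.
    + intros t' [<-|Ht'].
      * exists u; split; [left; reflexivity| exact Hu].
      * destruct (H1 t' Ht') as [u' [Hu1 Hu2]]; exists u'; split; [right; exact Hu1| exact Hu2].
    + intros u' [<-|Hu'].
      * exists t; split; [left; reflexivity| exact Hu].
      * destruct (H2 u' Hu') as [t' [Ht1 Ht2]]; exists t'; split; [right; exact Ht1| exact Ht2].
Qed.

Lemma fin_inter {T : Type} (op : (T -> Prop) -> Prop) (Ht : is_topology op)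
  (l : list (T -> Prop)) : (forall U, In U l -> op U) ->
  exists O, op O /\ forall x, O x <-> forall U, In U l -> U x.
Proof.
  destruct Ht as [HT [HI _]].
  induction l as [|u l IH]; intros H.
  - exists (fun _ => True); split; [exact HT|]. intros x; split; [intros _ U []| intros _; exact I].
  - destruct IH as [O [HO HO']]. { intros U HU; apply H; right; exact HU. }
    exists (fun x => u x /\ O x); split.
    + apply HI; [apply H; left; reflexivity| exact HO].
    + intros x; split.
      * intros [H1 H2] U [<-|HU]; [exact H1| apply (proj1 (HO' x) H2); exact HU].
      * intros H3; split; [apply H3; left; reflexivity| apply (proj2 (HO' x)); intros U HU; apply H3; right; exact HU].
Qed.

Lemma prod_topology {A B : Type} (opA : (A -> Prop) -> Prop) (opB : (B -> Prop) -> Prop) :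
  is_topology opA -> is_topology opB -> is_topology (prod_open opA opB).
Proof.
  intros [HA1 [HA2 HA3]] [HB1 [HB2 HB3]]; split; [|split].
  - intros p _. exists (fun _ => True), (fun _ => True); repeat split; auto.
  - intros U V HU HV p [Hp1 Hp2].
    destruct (HU p Hp1) as [U1 [V1 [Ha1 [Hb1 [Hc1 [Hd1 H1]]]]]].
    destruct (HV p Hp2) as [U2 [V2 [Ha2 [Hb2 [Hc2 [Hd2 H2]]]]]].
    exists (fun a => U1 a /\ U2 a), (fun b => V1 b /\ V2 b); repeat split; auto;
      [apply H1| apply H2]; tauto.
  - intros F HF p [W [HFW HW]].
    destruct (HF W HFW p HW) as [U1 [V1 [Ha1 [Hb1 [Hc1 [Hd1 H1]]]]]].
    exists U1, V1; repeat split; auto. intros a b Ha Hb; exists W; split; auto.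
Qed.

Lemma singleton_compact {T : Type} (op : (T -> Prop) -> Prop) (b : T) :
  compact op (fun y => y = b).
Proof.
  intros F HFo Hcov. destruct (Hcov b eq_refl) as [U [HU HUb]].
  exists (U :: nil); split.
  - intros V [<-|[]]; exact HU.
  - intros x ->; exists U; split; [left; reflexivity| exact HUb].
Qed.

Lemma compact_image {A B : Type} (opA : (A -> Prop) -> Prop) (opB : (B -> Prop) -> Prop)
  (f : A -> B) (Hf : continuous opA opB f) (S : A -> Prop) :
  compact opA S -> compact opB (image f S).
Proof.
  intros HS F HFo Hcov.
  destruct (HS (fun U => exists V, F V /\ U = (fun a => V (f a)))) as [lA [HlA1 HlA2]].
  - intros U [V [HV ->]]. apply Hf, HFo, HV.
  - intros a Ha. destruct (Hcov (f a) (ex_intro _ a (conj Ha eq_refl))) as [V [HV HVa]].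
    exists (fun a => V (f a)); split; [exists V; split; auto| exact HVa].
  - destruct (list_choice (fun U V => F V /\ U = (fun a => V (f a))) lA) as [lV [H1 H2]].
    { intros U HU. apply HlA1, HU. }
    exists lV; split.
    + intros V HV. destruct (H2 V HV) as [U [_ [HFV _]]]; exact HFV.
    + intros y [a [Ha <-]]. destruct (HlA2 a Ha) as [U [HU HUa]].
      destruct (H1 U HU) as [V [HV [_ ->]]]. exists V; split; auto.
Qed.

Lemma compact_minus {T : Type} (op : (T -> Prop) -> Prop) (K : T -> Prop)
  (l : list (T -> Prop)) : compact op K -> (forall U, In U l -> op U) ->
  compact op (fun a => K a /\ ~ exists U, In U l /\ U a).
Proof.
  intros HK Hl F HFo Hcov.
  destruct (HK (fun U => F U \/ In U l)) as [l' [Hl'1 Hl'2]].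
  - intros U [HU|HU]; [apply HFo, HU| apply Hl, HU].
  - intros a Ha. destruct (classic (exists U, In U l /\ U a)) as [[U [HU HUa]]|Hn].
    + exists U; split; auto.
    + destruct (Hcov a (conj Ha Hn)) as [U [HU HUa]]; exists U; split; auto.
  - assert (Hfil : exists l'', (forall U, In U l'' -> F U) /\ (forall U, In U l' -> F U -> In U l'')).
    { clear Hl'1 Hl'2. induction l' as [|u l' IH].
      - exists nil; split; [intros ? []| intros ? []].
      - destruct IH as [l'' [H1 H2]]. destruct (classic (F u)) as [Hu|Hu].
        + exists (u :: l''); split.
          * intros U [<-|HU]; auto.
          * intros U [<-|HU] HFU; [left; reflexivity| right; auto].
        + exists l''; split; auto. intros U [<-|HU] HFU; [contradiction| auto]. }
    destruct Hfil as [l'' [H1 H2]]. exists l''; split; auto.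
    intros a [Ha Hn]. destruct (Hl'2 a Ha) as [U [HU HUa]].
    destruct (Hl'1 U HU) as [HFU|HUl].
    + exists U; split; auto.
    + exfalso; apply Hn; exists U; auto.
Qed.

Lemma separate {B : Type} (opB : (B -> Prop) -> Prop) (HB : is_topology opB)
  (N L : B -> Prop) (b : B) : hausdorff_set opB N -> compact opB L ->
  (forall y, L y -> N y) -> N b -> ~ L b ->
  exists O, opB O /\ O b /\ forall z, N z -> O z -> ~ L z.
Proof.
  intros HN HL HLN Hb HLb.
  destruct (HL (fun V => opB V /\ exists U, opB U /\ U b /\ forall z, N z -> V z -> U z -> False))
    as [ls [Hls1 Hls2]].
  - intros V [HV _]; exact HV.
  - intros y Hy. assert (y <> b) by (intros ->; contradiction).
    destruct (HN y b (HLN y Hy) Hb H) as [U [V [HU [HV [HUy [HVb Hd]]]]]].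
    exists U; split; [split; [exact HU| exists V; repeat split; auto]| exact HUy].
  - destruct (list_choice (fun V U => opB U /\ U b /\ forall z, N z -> V z -> U z -> False) ls)
      as [Us [H1 H2]].
    { intros V HV. destruct (Hls1 V HV) as [_ H]; exact H. }
    destruct (fin_inter opB HB Us) as [O [HO HO']].
    { intros U HU. destruct (H2 U HU) as [V [_ [HUo _]]]; exact HUo. }
    exists O; split; [exact HO|split].
    + apply HO'. intros U HU. destruct (H2 U HU) as [V [_ [_ [HUb _]]]]; exact HUb.
    + intros z Hz HOz HLz. destruct (Hls2 z HLz) as [V [HV HVz]].
      destruct (H1 V HV) as [U [HU [_ [_ Hd]]]].
      apply (Hd z Hz HVz). apply (proj1 (HO' z) HOz); exact HU.
Qed.

Lemma proper_compact {A B : Type} (opA : (A -> Prop) -> Prop) (opB : (B -> Prop) -> Prop)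
  (f : A -> B) : proper_map opA opB f ->
  forall K, compact opB K -> compact opA (fun a => K (f a)).
Proof.
  intros Hp K HK F HFo Hcov.
  set (opC := fun (U : option (list (A -> Prop)) -> Prop) => U None ->
     exists l0, (forall W, In W l0 -> F W) /\ forall l, (forall W, In W l0 -> In W l) -> U (Some l)).
  assert (HC : is_topology opC).
  { split; [|split].
    - intros _. exists nil; split; [intros ? []| intros; exact I].
    - intros U V HU HV [HU0 HV0].
      destruct (HU HU0) as [l0 [H01 H02]]. destruct (HV HV0) as [l1 [H11 H12]].
      exists (l0 ++ l1); split.
      + intros W HW; apply in_app_or in HW; destruct HW; auto.
      + intros l Hl; split; [apply H02| apply H12]; intros W HW; apply Hl, in_or_app; auto.
    - intros Fm HFm [U [HU HU0]]. destruct (HFm U HU HU0) as [l0 [H01 H02]].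
      exists l0; split; auto. intros l Hl; exists U; split; auto. }
  set (Z := fun q : A * option (list (A -> Prop)) => match snd q with
       | Some l => ~ exists W, In W l /\ F W /\ W (fst q)
       | None => ~ exists W, F W /\ W (fst q) end).
  assert (HZ : closed (prod_open opA opC) Z).
  { intros [a c] Hq. destruct c as [l|]; simpl in Hq; unfold Z in Hq; simpl in Hq.
    - apply NNPP in Hq. destruct Hq as [W [HWl [HFW HWa]]].
      exists W, (fun c => c = Some l); repeat split; auto.
      + intros H; discriminate.
      + intros a' c' Ha' ->. unfold Z; simpl. intros Hn; apply Hn; exists W; auto.
    - apply NNPP in Hq. destruct Hq as [W [HFW HWa]].
      exists W, (fun c => match c with None => True | Some l => In W l end); repeat split; auto.
      + intros _. exists (W :: nil); split.
        * intros V [<-|[]]; exact HFW.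
        * intros l Hl; apply Hl; left; reflexivity.
      + intros a' [l|] Ha' Hc; unfold Z; simpl; intros Hn; apply Hn; exists W; auto. }
  specialize (Hp _ opC HC Z HZ).
  destruct (HK (fun U => opB U /\ exists l0, (forall W, In W l0 -> F W) /\
                 forall a, U (f a) -> exists W, In W l0 /\ W a)) as [lU [HlU1 HlU2]].
  - intros U [HU _]; exact HU.
  - intros y Hy.
    assert (Hni : ~ image (fun q : A * option (list (A -> Prop)) => (f (fst q), snd q)) Z (y, None)).
    { intros [[a c] [HZq Heq]]. simpl in Heq. injection Heq; intros -> Hfa.
      unfold Z in HZq; simpl in HZq. subst y. apply HZq. apply (Hcov a Hy). }
    destruct (Hp (y, None) Hni) as [U [V [HU [HV [HUy [HV0 HUV]]]]]].
    destruct (HV HV0) as [l0 [H01 H02]].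
    exists U; split; [split; [exact HU| exists l0; split; [exact H01|]]| exact HUy].
    intros a Ha. specialize (HUV (f a) (Some l0) Ha (H02 l0 (fun W H => H))).
    destruct (classic (exists W, In W l0 /\ W a)) as [He|Hne]; [exact He|].
    exfalso; apply HUV. exists (a, Some l0); split; [|reflexivity].
    unfold Z; simpl. intros [W [HW1 [_ HW3]]]; apply Hne; exists W; auto.
  - destruct (list_choice (fun U l0 => (forall W, In W l0 -> F W) /\
                 forall a, U (f a) -> exists W, In W l0 /\ W a) lU) as [Ls [H1 H2]].
    { intros U HU; destruct (HlU1 U HU) as [_ H]; exact H. }
    exists (concat Ls); split.
    + intros W HW. apply in_concat in HW. destruct HW as [l0 [Hl0 HW]].
      destruct (H2 l0 Hl0) as [U [_ [H _]]]. apply H, HW.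
    + intros a Ha. destruct (HlU2 (f a) Ha) as [U [HU HUa]].
      destruct (H1 U HU) as [l0 [Hl0 [_ H]]]. destruct (H a HUa) as [W [HW HWa]].
      exists W; split; auto. apply in_concat. exists l0; auto.
Qed.

Lemma compact_proper {A B : Type} (opA : (A -> Prop) -> Prop) (opB : (B -> Prop) -> Prop)
  (f : A -> B) (HB : is_topology opB) (HBl : locally_hausdorff_locally_compact opB)
  (Hf : continuous opA opB f)
  (Hc : forall K, compact opB K -> compact opA (fun a => K (f a))) :
  proper_map opA opB f.
Proof.
  intros C opC HC Z HZ [b c] Hn.
  assert (Hfib : forall a, f a = b -> ~ Z (a, c)).
  { intros a Ha HZa. apply Hn. exists (a, c); simpl; rewrite Ha; auto. }
  destruct (Hc _ (singleton_compact opB b)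
     (fun U => opA U /\ exists V, opC V /\ V c /\ forall a c', U a -> V c' -> ~ Z (a, c')))
     as [lt [Hlt1 Hlt2]].
  - intros U [HU _]; exact HU.
  - intros a Ha. destruct (HZ (a, c) (Hfib a Ha)) as [U [V [HU [HV [HUa [HVc HUV]]]]]].
    exists U; split; [split; [exact HU| exists V; repeat split; auto]| exact HUa].
  - destruct (list_choice (fun U V => opC V /\ V c /\ forall a c', U a -> V c' -> ~ Z (a, c')) lt)
      as [Vs [H1 H2]].
    { intros U HU; destruct (Hlt1 U HU) as [_ H]; exact H. }
    destruct (fin_inter opC HC Vs) as [V0 [HV0 HV0']].
    { intros V HV; destruct (H2 V HV) as [U [_ [H _]]]; exact H. }
    assert (HV0c : V0 c).
    { apply HV0'; intros V HV; destruct (H2 V HV) as [U [_ [_ [H _]]]]; exact H. }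
    set (W := fun a => exists U, In U lt /\ U a).
    assert (HW : forall a c', W a -> V0 c' -> ~ Z (a, c')).
    { intros a c' [U [HU HUa]] Hc'. destruct (H1 U HU) as [V [HV [_ [_ H]]]].
      apply (H a c' HUa). apply (proj1 (HV0' c') Hc'); exact HV. }
    destruct (HBl b) as [N [[U0 [HU0 [HU0b HU0N]]] [HNc HNh]]].
    set (L := image f (fun a => N (f a) /\ ~ W a)).
    assert (HLc : compact opB L).
    { apply (compact_image opA opB f Hf). apply compact_minus; [apply Hc, HNc|].
      intros U HU; destruct (Hlt1 U HU) as [H _]; exact H. }
    destruct (separate opB HB N L b HNh HLc) as [O [HO [HOb HOL]]].
    + intros y [a [[Ha _] <-]]; exact Ha.
    + apply HU0N, HU0b.
    + intros [a [[_ HWa] Hab]]. apply HWa. destruct (Hlt2 a Hab) as [U [HU HUa]]; exists U; auto.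
    + exists (fun y => O y /\ U0 y), V0. repeat split; auto.
      * destruct HB as [_ [HI _]]; apply HI; auto.
      * intros y c' [HOy HU0y] Hc' [[a c''] [HZq Heq]]. simpl in Heq.
        injection Heq; intros -> <-.
        destruct (classic (W a)) as [HWa|HWa].
        -- exact (HW a c' HWa Hc' HZq).
        -- apply (HOL (f a) (HU0N _ HU0y) HOy). exists a; split; auto.

Qed.

Lemma tychonoff2 {A B : Type} (opA : (A -> Prop) -> Prop) (opB : (B -> Prop) -> Prop)
  (HA : is_topology opA) (K1 : A -> Prop) (K2 : B -> Prop) :
  compact opA K1 -> compact opB K2 ->
  compact (prod_open opA opB) (fun q => K1 (fst q) /\ K2 (snd q)).
Proof.
  intros HK1 HK2 F HFo Hcov.
  assert (Claim : forall x1, K1 x1 -> exists U, opA U /\ U x1 /\ exists Ws,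
     (forall W, In W Ws -> F W) /\ forall a b, U a -> K2 b -> exists W, In W Ws /\ W (a, b)).
  { intros x1 Hx1.
    destruct (HK2 (fun V => opB V /\ exists U W, opA U /\ U x1 /\ F W /\
                     forall a b, U a -> V b -> W (a, b))) as [l2 [Hl21 Hl22]].
    - intros V [HV _]; exact HV.
    - intros x2 Hx2. destruct (Hcov (x1, x2) (conj Hx1 Hx2)) as [W [HFW HW]].
      destruct (HFo W HFW (x1, x2) HW) as [U [V [HU [HV [HUx [HVx HUV]]]]]].
      exists V; split; [split; [exact HV| exists U, W; repeat split; auto]| exact HVx].
    - destruct (list_choice (fun V (p : (A -> Prop) * (A * B -> Prop)) =>
          opA (fst p) /\ fst p x1 /\ F (snd p) /\ forall a b, fst p a -> V b -> snd p (a, b)) l2)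
        as [lp [H1 H2]].
      { intros V HV. destruct (Hl21 V HV) as [_ [U [W H]]]. exists (U, W); exact H. }
      destruct (fin_inter opA HA (map fst lp)) as [O [HO HO']].
      { intros U HU. apply in_map_iff in HU. destruct HU as [p [<- Hp]].
        destruct (H2 p Hp) as [V [_ [H _]]]; exact H. }
      exists O; split; [exact HO| split].
      + apply HO'. intros U HU. apply in_map_iff in HU. destruct HU as [p [<- Hp]].
        destruct (H2 p Hp) as [V [_ [_ [H _]]]]; exact H.
      + exists (map snd lp); split.
        * intros W HW. apply in_map_iff in HW. destruct HW as [p [<- Hp]].
          destruct (H2 p Hp) as [V [_ [_ [_ [H _]]]]]; exact H.
        * intros a b Ha Hb. destruct (Hl22 b Hb) as [V [HV HVb]].
          destruct (H1 V HV) as [p [Hp [_ [_ [_ H]]]]].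
          exists (snd p); split; [apply in_map; exact Hp|]. apply H; [|exact HVb].
          apply (proj1 (HO' a) Ha). apply in_map; exact Hp. }
  destruct (HK1 (fun U => opA U /\ exists Ws, (forall W, In W Ws -> F W) /\
       forall a b, U a -> K2 b -> exists W, In W Ws /\ W (a, b))) as [l1 [Hl11 Hl12]].
  - intros U [HU _]; exact HU.
  - intros x1 Hx1. destruct (Claim x1 Hx1) as [U [HU [HUx HWs]]].
    exists U; split; [split; auto| exact HUx].
  - destruct (list_choice (fun U Ws => (forall W, In W Ws -> F W) /\
       forall a b, U a -> K2 b -> exists W, In W Ws /\ W (a, b)) l1) as [Ls [H1 H2]].
    { intros U HU; destruct (Hl11 U HU) as [_ H]; exact H. }
    exists (concat Ls); split.
    + intros W HW. apply in_concat in HW. destruct HW as [Ws [HWs HW]].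
      destruct (H2 Ws HWs) as [U [_ [H _]]]. apply H, HW.
    + intros [a b] [Ha Hb]. simpl in Ha, Hb. destruct (Hl12 a Ha) as [U [HU HUa]].
      destruct (H1 U HU) as [Ws [HWs [_ H]]]. destruct (H a b HUa Hb) as [W [HW HWab]].
      exists W; split; auto. apply in_concat; exists Ws; auto.
Qed.

Lemma lhlc_prod {X : Type} (opX : (X -> Prop) -> Prop) (HX : is_topology opX) :
  locally_hausdorff_locally_compact opX ->
  locally_hausdorff_locally_compact (prod_open opX opX).
Proof.
  intros Hl [x1 x2].
  destruct (Hl x1) as [N1 [[U1 [HU1 [HU1x HU1N]]] [HN1c HN1h]]].
  destruct (Hl x2) as [N2 [[U2 [HU2 [HU2x HU2N]]] [HN2c HN2h]]].
  assert (HT := proj1 HX).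
  exists (fun q => N1 (fst q) /\ N2 (snd q)); split; [|split].
  - exists (fun q => U1 (fst q) /\ U2 (snd q)); split; [|split].
    + intros p [Hp1 Hp2]. exists U1, U2; repeat split; auto.
    + simpl; auto.
    + intros z [Hz1 Hz2]; split; auto.
  - apply tychonoff2; auto.
  - intros [a1 a2] [b1 b2] [Ha1 Ha2] [Hb1 Hb2] Hne. simpl in *.
    destruct (classic (a1 = b1)) as [E1|E1].
    + assert (E2 : a2 <> b2) by (intros E2; apply Hne; subst; reflexivity).
      destruct (HN2h a2 b2 Ha2 Hb2 E2) as [U [V [HU [HV [HUa [HVb Hd]]]]]].
      exists (fun q => U (snd q)), (fun q => V (snd q)); repeat split; auto.
      * intros p Hp. exists (fun _ => True), U; repeat split; auto.
      * intros p Hp. exists (fun _ => True), V; repeat split; auto.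
      * intros [z1 z2] [_ Hz] HUz HVz. exact (Hd z2 Hz HUz HVz).
    + destruct (HN1h a1 b1 Ha1 Hb1 E1) as [U [V [HU [HV [HUa [HVb Hd]]]]]].
      exists (fun q => U (fst q)), (fun q => V (fst q)); repeat split; auto.
      * intros p Hp. exists U, (fun _ => True); repeat split; auto.
      * intros p Hp. exists V, (fun _ => True); repeat split; auto.
      * intros [z1 z2] [Hz _] HUz HVz. exact (Hd z1 Hz HUz HVz).
Qed.

Lemma theta_cont (G X : Type) (opG : (G -> Prop) -> Prop) (opX : (X -> Prop) -> Prop)
  (unit : G -> Prop) (r s : G -> G) (mul : G -> G -> G)
  (rX : X -> G) (act : G -> X -> X) (HXtop : is_topology opX)
  (Hact : continuous_action opG opX unit r s mul rX act) :
  continuous (GX_open opG opX s rX) (prod_open opX opX) (Theta s rX act).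
Proof.
  destruct Hact as [_ [_ [Hc _]]].
  destruct HXtop as [_ [HI _]].
  intros V HV.
  exists (fun q : G * X => exists U1 U2 V1, opX U1 /\ opX U2 /\
     (forall a b, U1 a -> U2 b -> V (a, b)) /\ prod_open opG opX V1 /\
     (forall p : GX s rX, U1 (act (fst (proj1_sig p)) (snd (proj1_sig p))) <-> V1 (proj1_sig p)) /\
     V1 q /\ U2 (snd q)).
  split.
  - intros q [U1 [U2 [V1 [HU1 [HU2 [HUV [HV1 [HV1e [HV1q HU2q]]]]]]]]].
    destruct (HV1 q HV1q) as [Ug [Ux [HUg [HUx [HUgq [HUxq Hbox]]]]]].
    exists Ug, (fun x => Ux x /\ U2 x); repeat split; auto.
    intros a b Ha [Hb1 Hb2]. exists U1, U2, V1.
    repeat (split; [assumption|]). split; [apply Hbox; assumption| assumption].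
  - intros p. split.
    + intros HVp. destruct (HV _ HVp) as [U1 [U2 [HU1 [HU2 [HU1p [HU2p HUV]]]]]].
      destruct (Hc U1 HU1) as [V1 [HV1 HV1e]].
      exists U1, U2, V1. repeat (split; [assumption|]). split; [apply (HV1e p); exact HU1p| exact HU2p].
    + intros [U1 [U2 [V1 [HU1 [HU2 [HUV [HV1 [HV1e [HV1q HU2q]]]]]]]]].
      unfold Theta. apply HUV; [apply (HV1e p); exact HV1q| exact HU2q].
Qed.

Theorem mainTheorem2 (G X : Type) (opG : (G -> Prop) -> Prop) (opX : (X -> Prop) -> Prop)
  (unit : G -> Prop) (r s : G -> G) (mul : G -> G -> G) (inv : G -> G)
  (rX : X -> G) (act : G -> X -> X)
  (HG : lhlc_groupoid opG unit r s mul inv)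
  (HXtop : is_topology opX)
  (HX : locally_hausdorff_locally_compact opX)
  (Hact : continuous_action opG opX unit r s mul rX act) :
  proper_map (GX_open opG opX s rX) (prod_open opX opX) (Theta s rX act) <->
  (forall W : X * X -> Prop, compact (prod_open opX opX) W ->
     compact (GX_open opG opX s rX) (fun p => W (Theta s rX act p))).
Proof.
  split.
  - intros Hp W HW. exact (proper_compact _ _ _ Hp W HW).
  - intros Hc. apply compact_proper.
    + apply prod_topology; exact HXtop.
    + apply lhlc_prod; assumption.
    + eapply theta_cont; eassumption.
    + exact Hc.
Qed.
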